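(* Let $f,\lambda,\alpha,\beta>0$ be reals and let $G$ be a finite graph with at least one vertex, of maximum degree $\Delta\ge1$, in which the subgraph induced by the neighbourhood of every vertex has at most $\Delta^2/f$ edges. Let $\mathbf{I}$ be an independent set drawn from the hard-core model at fugacity $\lambda$ on $G$. Then for every $v\in V(G)$, \[ \alpha \Pr(v\in\mathbf{I}) + \beta\,\mathbb{E}|N(v)\cap \mathbf{I}| \ge \frac{\lambda}{1+\lambda}\min_{z\ge0}\left(\alpha(1+\lambda)^{-z} + \beta z(1+\lambda)^{-\frac{2\Delta^2}{fz}}\right)\,. \] Moreover, \[ \frac{1}{|V(G)|}\mathbb{E}|\mathbf{I}| \ge \min_{z>0}\max\left\{\frac{\lambda}{1+\lambda}(1+\lambda)^{-z},\ \frac{\lambda}{1+\lambda}\frac{z}{\Delta}(1+\lambda)^{-\frac{2\Delta^2}{fz}}\right\}\,. \]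
   Context: For a graph $G$ with set $\mathcal{I}(G)$ of independent sets (including the empty set) and $\lambda>0$, the hard-core model on $G$ at fugacity $\lambda$ is the probability distribution on $\mathcal{I}(G)$ with $\Pr(\mathbf{I}=I)=\lambda^{|I|}/Z_G(\lambda)$, where $Z_G(\lambda)=\sum_{I\in\mathcal{I}(G)}\lambda^{|I|}$. In the first inequality, the term $z(1+\lambda)^{-2\Delta^2/(fz)}$ at $z=0$ is interpreted as its limit $0$. *)

(* Defs.v *)
From HB Require Import structures.
From mathcomp Require Import all_boot all_order all_algebra.
From mathcomp Require Import reals exp.
Set Implicit Arguments. Unset Strict Implicit. Unset Printing Implicit Defensive.
Import Order.TTheory GRing.Theory Num.Theory.
Local Open Scope ring_scope.

(* A finite simple graph is given by a vertex finType T and an adjacency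
   relation e : rel T, assumed symmetric and irreflexive in the theorem. *)
Section Graph.
Variables (T : finType) (e : rel T).

Definition nbhd (v : T) : {set T} := [set u | e v u].
Definition deg (v : T) : nat := #|nbhd v|.
Definition maxdeg : nat := \max_(v : T) deg v.

Definition induced_edges (S : {set T}) : {set {set T}} :=
  [set A : {set T} | (A \subset S) &&
     [exists u : T, exists w : T, (A == [set u; w]) && e u w]].

Definition independent (I : {set T}) : bool :=
  [forall u in I, forall w in I, ~~ e u w].

Section HardCore.
Variables (R : realType) (lam : R).

Definition hc_weight (I : {set T}) : R := lam ^+ #|I|.
Definition hc_Z : R := \sum_(I : {set T} | independent I) hc_weight I.
Definition hc_prob (I : {set T}) : R :=
  if independent I then hc_weight I / hc_Z else 0.
Definition hc_Pr_in (v : T) : R := \sum_(I : {set T} | v \in I) hc_prob I.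
Definition hc_E_nbhd (v : T) : R :=
  \sum_(I : {set T}) (#|nbhd v :&: I|)%:R * hc_prob I.
Definition hc_E_size : R := \sum_(I : {set T}) (#|I|)%:R * hc_prob I.
End HardCore.
End Graph.

(* z * (1+lam)^(-c/z), interpreted as its limit 0 at z = 0 *)
Definition zpow_term (R : realType) (lam c z : R) : R :=
  if z == 0 then 0 else z * (1 + lam) `^ (- (c / z)).

(* Main.v *)
Require Import Defs.
From HB Require Import structures.
From mathcomp Require Import all_boot all_order all_algebra.
From mathcomp Require Import reals exp sequences.
From mathcomp Require Import ring lra.
Import Order.TTheory GRing.Theory Num.Theory.
Local Open Scope ring_scope.


Section RealLemmas.
Variable R : realType.
Implicit Types x y z : R.

Lemma ln_ge1V x : 0 < x -> 1 - x^-1 <= ln x.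
Proof.
move=> x0.
have h := @le_ln1Dx R (x^-1 - 1).
have hx : -1 < x^-1 - 1 by rewrite ltrBrDr addNr invr_gt0.
have := h hx; rewrite addrC subrK lnV ?posrE //; lra.
Qed.

Lemma logsum {lam Z : R} : 0 < lam -> 0 < Z ->
  (lam + Z) * ln (lam + Z) <= (lam + Z) * ln (1 + lam) + Z * ln Z.
Proof.
move=> l0 Z0.
set S := lam + Z; set q := 1 + lam.
have S0 : 0 < S by rewrite /S; lra.
have q0 : 0 < q by rewrite /q; lra.
have iS : 0 < S^-1 by rewrite invr_gt0.
have h1 := ln_ge1V _ (mulr_gt0 (mulr_gt0 Z0 q0) iS).
have h2 := ln_ge1V _ (mulr_gt0 q0 iS).
rewrite !lnM ?posrE ?mulr_gt0 // lnV ?posrE // in h1 h2.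
rewrite !invfM !invrK in h1 h2.
have e1 : Z * (1 - Z^-1 * q^-1 * S) = Z - S / q.
  by field; rewrite !gt_eqF.
have e2 : lam * (1 - q^-1 * S) = lam - lam * S / q.
  by field; rewrite !gt_eqF.
have e3 : S / q + lam * S / q = S.
  by rewrite /q /S; field; rewrite /q gt_eqF.
have k1 : Z * (1 - Z^-1 * q^-1 * S) <= Z * (ln Z + ln q - ln S).
  by rewrite ler_pM2l.
have k2 : lam * (1 - q^-1 * S) <= lam * (ln q - ln S).
  by rewrite ler_pM2l.
rewrite e1 in k1; rewrite e2 in k2.
have eS : S = lam + Z by [].
have e4 : Z * (ln Z + ln q - ln S) + lam * (ln q - ln S) = S * ln q + Z * ln Z - S * ln S by rewrite /S; ring.
nra.
Qed.


Lemma alpha_core (lam Z : R) (n : nat) : 0 < lam -> 1 <= Z ->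
  ln Z <= n%:R * ln (1 + lam) ->
  ln (lam + Z) <= ln (1 + lam) * (1 + n%:R * Z / (lam + Z)).
Proof.
move=> l0 Z1 hZ.
have Z0 : 0 < Z by lra.
have S0 : 0 < lam + Z by lra.
have h := logsum l0 Z0.
have h2 : (lam + Z) * ln (lam + Z) <= (lam + Z) * (ln (1 + lam) * (1 + n%:R * Z / (lam + Z))).
  have -> : (lam + Z) * (ln (1 + lam) * (1 + n%:R * Z / (lam + Z)))
     = (lam + Z) * ln (1 + lam) + Z * (n%:R * ln (1 + lam)).
    by field; rewrite !gt_eqF.
  apply: (le_trans h); rewrite lerD2l ler_pM2l //.
by rewrite ler_pM2l in h2.
Qed.

Lemma jensen_exp (I : finType) (P : {set I}) (d : I -> R) (L : R) :
  (0 < #|P|)%N ->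
  #|P|%:R * expR (- (L * ((\sum_(i in P) d i) / #|P|%:R)))
    <= \sum_(i in P) expR (- (L * d i)).
Proof.
move=> n0.
set n := #|P|%:R; set m := (\sum_(i in P) d i) / n.
have n0' : 0 < n by rewrite /n ltr0n.
have step : forall i, expR (- (L * m)) * (1 - L * (d i - m)) <= expR (- (L * d i)).
  move=> i.
  have -> : expR (- (L * d i)) = expR (- (L * m)) * expR (- (L * (d i - m))).
    by rewrite -expRD; congr expR; ring.
  rewrite ler_pM2l ?expR_gt0 //.
  have := expR_ge1Dx (- (L * (d i - m))); lra.
apply: le_trans (ler_sum _ (fun i _ => step i)).
have s1 : \sum_(i in P) (d i - m) = 0.
  by rewrite sumrB sumr_const -/n /m -mulr_natr -/n; field; rewrite !gt_eqF.
have s2 : \sum_(i in P) (1 - L * (d i - m)) = n.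
  by rewrite sumrB sumr_const -mulr_sumr s1 mulr0 subr0.
by rewrite -mulr_sumr s2 mulrC.
Qed.

Lemma tangent (L g z0 z E0 K : R) : 0 < L -> 0 <= g -> 0 < z0 -> 0 <= z ->
  E0 = expR (- (g / z0)) ->
  K = E0 * (1 + g / z0) / L * expR (L * z0) ->
  K * expR (- (L * z0)) + z0 * E0 <=
  K * expR (- (L * z)) + (if z == 0 then 0 else z * expR (- (g / z))).
Proof.
move=> L0 g0 z00 z0' hE0 hK.
have E00 : 0 < E0 by rewrite hE0 expR_gt0.
have KE : K * expR (- (L * z)) = E0 * (1 + g / z0) / L * expR (L * (z0 - z)).
  by rewrite hK -mulrA -expRD; congr (_ * expR _); ring.
have KE0 : K * expR (- (L * z0)) = E0 * (1 + g / z0) / L.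
  by rewrite hK -mulrA -expRD addrN expR0 mulr1.
rewrite KE KE0.
have hexp := expR_ge1Dx (L * (z0 - z)).
have gz : 0 <= g / z0 by rewrite divr_ge0 // ltW.
have c0 : 0 <= E0 * (1 + g / z0) / L by rewrite divr_ge0 ?mulr_ge0 ?ltW //; lra.
have key : E0 * (1 + g / z0) / L * expR (L * (z0 - z)) >=
           E0 * (1 + g / z0) / L * (1 + L * (z0 - z)) by rewrite ler_wpM2l.
have e5 : E0 * (1 + g / z0) / L * (1 + L * (z0 - z)) =
          E0 * (1 + g / z0) / L + E0 * (1 + g / z0) * (z0 - z).
  by field; rewrite !gt_eqF.
rewrite e5 in key.
case: eqP => [ez|zn0].
  rewrite ez in key *; rewrite addr0 ?subr0.
  have Eg := mulr_ge0 (ltW E00) g0.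
  have e7 : E0 * (1 + g / z0) * z0 = z0 * E0 + E0 * g by field; rewrite !gt_eqF.
  move: key; rewrite ?subr0 e7 => key; lra.
have zp : 0 < z by rewrite lt_def; apply/andP; split => //; apply/eqP.
have hz := expR_ge1Dx (g / z0 - g / z).
have ez : expR (- (g / z)) = E0 * expR (g / z0 - g / z).
  by rewrite hE0 -expRD; congr expR; ring.
have h3 : z * expR (- (g / z)) >= z * (E0 * (1 + (g / z0 - g / z))).
  rewrite ez; apply: ler_wpM2l; first exact: ltW.
  apply: ler_wpM2l; first exact: ltW. lra.
have e6 : z * (E0 * (1 + (g / z0 - g / z))) = z0 * E0 + E0 * (1 + g / z0) * (z - z0).
  by field; rewrite !gt_eqF.
rewrite e6 in h3.
lra.
Qed.

End RealLemmas.


Section Comb.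
Set Implicit Arguments. Unset Strict Implicit.
Variables (R : realType) (T : finType) (e : rel T).
Hypothesis e_sym : symmetric e.
Hypothesis e_irr : irreflexive e.

Lemma independentP (I : {set T}) :
  reflect (forall u w, u \in I -> w \in I -> ~~ e u w) (independent e I).
Proof.
apply: (iffP forallP) => [h u w uI wI | h u].
  by move/implyP: (h u) => /(_ uI) /forallP /(_ w) /implyP /(_ wI).
apply/implyP => uI; apply/forallP => w; apply/implyP => wI; exact: h.
Qed.

Lemma indep_sub (A B : {set T}) : A \subset B -> independent e B -> independent e A.
Proof.
move=> /subsetP AB /independentP h; apply/independentP => u w uA wA.
by apply: h; apply: AB.
Qed.

Lemma indepU (C B : {set T}) :
  independent e (C :|: B) <->
  [/\ independent e C, independent e B & forall x y, x \in C -> y \in B -> ~~ e x y].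
Proof.
split.
  move/independentP => h; split.
  - by apply/independentP => u w uC wC; apply: h; rewrite inE ?uC ?wC.
  - by apply/independentP => u w uC wC; apply: h; rewrite inE ?uC ?wC orbT.
  - by move=> x y xC yB; apply: h; rewrite inE ?xC ?yB ?orbT.
case=> /independentP hC /independentP hB hx; apply/independentP => u w.
rewrite !inE => /orP[uC|uB] /orP[wC|wB].
- exact: hC.
- exact: hx.
- by rewrite e_sym; apply: hx.
- exact: hB.
Qed.

Lemma split_sum (S A : {set T}) (F : {set T} -> R) :
  \sum_(K : {set T} | K \subset S) F K =
  \sum_(C : {set T} | C \subset S :\: A) \sum_(B : {set T} | B \subset S :&: A) F (C :|: B).
Proof.
rewrite pair_big /=.
rewrite (reindex_onto (fun p : {set T} * {set T} => p.1 :|: p.2)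
                      (fun K : {set T} => (K :\: A, K :&: A))) /=; last first.
  by move=> K _; rewrite setUC setID.
apply: eq_bigl => -[C B] /=.
apply/idP/idP.
  case/andP => sub /eqP [eC eB].
  by apply/andP; split; [rewrite -eC; apply: setSD | rewrite -eB; apply: setSI].
case/andP => /subsetP hC /subsetP hB.
apply/andP; split.
  apply/subsetP => x; rewrite inE => /orP[xC|xB].
    by move: (hC x xC); rewrite inE => /andP[].
  by move: (hB x xB); rewrite inE => /andP[].
apply/eqP; congr (_, _); apply/setP => x; move: (hC x) (hB x); rewrite !inE;
  by case: (x \in C); case: (x \in B); case: (x \in A); case: (x \in S) => //= h1 h2;
     first [ by have := h1 isT | by have := h2 isT ].
Qed.

Lemma sum_pow_subsets (X : {set T}) (lam : R) :
  \sum_(K : {set T} | K \subset X) lam ^+ #|K| = (1 + lam) ^+ #|X|.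
Proof.
have := @bigA_distr R 0 1 *%R +%R T (fun i : T => if i \in X then lam else 0) (fun=> 1).
move=> h.
have L : \prod_(i : T) ((if i \in X then lam else 0) + 1) = (1 + lam) ^+ #|X|.
  rewrite (bigID (mem X)) /= [X in _ * X]big1; last by move=> i /negPf ->; rewrite add0r.
  rewrite mulr1 -prodr_const; apply: eq_bigr => i iX.
  by rewrite iX addrC.
rewrite -L h [LHS]big_mkcond /=; apply: eq_big => // K _.
rewrite -big_mkcond /=.
case: ifP => sub.
  rewrite (eq_bigr (fun=> lam)) ?prodr_const //.
  by move=> i iK; rewrite (subsetP sub i iK).
have [i iK iX] : exists2 i, i \in K & i \notin X.
  by apply/exists_inP; rewrite -negb_forall_in; apply/negP => /forall_inP h1;
     move/negP: sub; apply; apply/subsetP => y /h1.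
by rewrite (bigD1 i) //= (negPf iX) mul0r.
Qed.


Section Sums.
Variable lam : R.
Hypothesis lam_gt0 : 0 < lam.

Definition Zs (U : {set T}) : R :=
  \sum_(K : {set T} | K \subset U) (if independent e K then lam ^+ #|K| else 0).
Definition Ws (U : {set T}) : R :=
  \sum_(K : {set T} | K \subset U)
     (if independent e K then (#|K|)%:R * lam ^+ #|K| else 0).
Definition Zu (U : {set T}) (u : T) : R :=
  \sum_(K : {set T} | K \subset U)
     (if independent e K && (u \in K) then lam ^+ #|K| else 0).

Lemma indep0 : independent e set0.
Proof. by apply/independentP => u w; rewrite inE. Qed.

Lemma Zs_ge1 (U : {set T}) : 1 <= Zs U.
Proof.
rewrite /Zs (bigD1 set0) ?sub0set //= indep0 cards0 expr0 lerDl.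
apply: sumr_ge0 => K _; case: ifP => // _; exact: exprn_ge0 (ltW lam_gt0).
Qed.

Lemma Zs_le (U : {set T}) : Zs U <= (1 + lam) ^+ #|U|.
Proof.
rewrite -sum_pow_subsets; apply: ler_sum => K _.
case: ifP => // _; exact: exprn_ge0 (ltW lam_gt0).
Qed.

Lemma Ws_ge0 (U : {set T}) : 0 <= Ws U.
Proof.
apply: sumr_ge0 => K _; case: ifP => // _.
by apply: mulr_ge0; [rewrite ler0n | exact: exprn_ge0 (ltW lam_gt0)].
Qed.

Lemma Ws_eq (U : {set T}) : Ws U = \sum_(u in U) Zu U u.
Proof.
rewrite /Zu exchange_big /=; apply: eq_bigr => K sub.
case: ifP => /= ind; last by rewrite big1.
rewrite -big_mkcondr /= -mulr_natl.
rewrite (eq_bigl (mem K)) ?sumr_const ?mulr_natl //.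
move=> u /=; apply/andP/idP => [[]//| uK]; split => //.
exact: (subsetP sub).
Qed.

Lemma Zu_bound (U : {set T}) (u : T) : u \in U ->
  lam * Zs U <= (1 + lam) ^+ (#|nbhd e u :&: U|).+1 * Zu U u.
Proof.
move=> uU.
set A := u |: nbhd e u.
set g := fun C : {set T} => if independent e C then lam ^+ #|C| else 0.
have lam0 : 0 <= lam by exact: ltW.
have g0 : forall C, 0 <= g C by move=> C; rewrite /g; case: ifP => // _; exact: exprn_ge0.
have cardA : #|U :&: A| = (#|nbhd e u :&: U|).+1.
  have -> : U :&: A = u |: (nbhd e u :&: U).
    apply/setP => x; rewrite !inE; case: eqP => [->|] /=; first by rewrite uU.
    by move=> _; rewrite andbC.
  by rewrite cardsU1 !inE e_irr.
have disj : forall C B : {set T}, C \subset U :\: A -> B \subset U :&: A ->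
    #|C :|: B| = (#|C| + #|B|)%N.
  move=> C B /subsetP hC /subsetP hB.
  rewrite cardsU; suff -> : C :&: B = set0 by rewrite cards0 subn0.
  apply/setP => x; rewrite !inE; apply/negP => /andP[xC xB].
  by move: (hC x xC) (hB x xB); rewrite !inE => /andP[/negP nA _] /andP[_ ].
have h1 : Zs U <= \sum_(C : {set T} | C \subset U :\: A) g C * (1 + lam) ^+ #|U :&: A|.
  rewrite /Zs (split_sum U A); apply: ler_sum => C hC.
  rewrite -sum_pow_subsets mulr_sumr; apply: ler_sum => B hB.
  case: ifP => ind; last by apply: mulr_ge0 => //; exact: exprn_ge0.
  move/indepU: ind => [indC _ _].
  by rewrite /g indC disj // exprD.
have h2 : lam * \sum_(C : {set T} | C \subset U :\: A) g C <= Zu U u.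
  rewrite /Zu (split_sum U A) mulr_sumr; apply: ler_sum => C hC.
  have uA : [set u] \subset U :&: A.
    by rewrite sub1set !inE uU eqxx.
  rewrite (bigD1 [set u]) //= -[X in X <= _]addr0; apply: lerD; last first.
    by apply: sumr_ge0 => B _; case: ifP => // _; exact: exprn_ge0.
  rewrite /g; case: ifP => indC; last first.
    by rewrite mulr0; case: ifP => // _; exact: exprn_ge0.
  have indCu : independent e (C :|: [set u]).
    apply/indepU; split => //; first by apply/independentP => x y; rewrite !inE => /eqP-> /eqP->; rewrite e_irr.
    move=> x y xC; rewrite inE => /eqP ->.
    move: (subsetP hC x xC); rewrite !inE => /andP[].
    by rewrite negb_or => /andP[_ ]; rewrite e_sym.
  rewrite indCu !inE eqxx orbT /= disj // cards1 exprD expr1 mulrC.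
  by [].
apply: le_trans (_ : lam * (\sum_(C : {set T} | C \subset U :\: A) g C * (1 + lam) ^+ #|U :&: A|) <= _).
  by rewrite ler_pM2l.
rewrite -mulr_suml mulrA [lam * _]mulrC -mulrA -cardA mulrC.
have q0 : 0 < 1 + lam by lra.
by rewrite [lam * _]mulrC -mulrA ler_pM2l ?exprn_gt0.

Qed.

End Sums.

Lemma deg_sum (U : {set T}) :
  (\sum_(u in U) #|nbhd e u :&: U| <= 2 * #|induced_edges e U|)%N.
Proof.
set P := [set p : T * T | [&& p.1 \in U, p.2 \in U & e p.1 p.2]].
have s1 : (\sum_(u in U) #|nbhd e u :&: U|)%N = #|P|.
  rewrite -sum1_card.
  rewrite (eq_bigl (fun p : T * T => (p.1 \in U) && ((p.2 \in U) && e p.1 p.2))); last first.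
    by move=> p; rewrite inE.
  rewrite -(pair_big_dep (fun u => u \in U) (fun u w => (w \in U) && e u w) (fun _ _ => 1%N)) /=.
  apply: eq_bigr => u uU; rewrite -sum1_card; apply: eq_bigl => w.
  by rewrite !inE andbC.
rewrite s1 -sum1_card.
rewrite (partition_big (fun p : T * T => [set p.1; p.2]) (mem (induced_edges e U))) /=; last first.
  move=> [a b]; rewrite inE /= => /and3P[aU bU eab].
  rewrite inE; apply/andP; split.
    by apply/subsetP => x; rewrite !inE => /orP[/eqP->|/eqP->].
  by apply/existsP; exists a; apply/existsP; exists b; rewrite eqxx eab.
rewrite mulnC -sum_nat_const; apply: leq_sum => X.
rewrite inE => /andP[_ /existsP[a /existsP[b /andP[/eqP eX eab]]]].
rewrite sum1_card.
apply: (leq_trans (subset_leq_card (_ : _ \subset [set (a, b); (b, a)]))); last first.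
  by rewrite cards2; case: (_ != _).
apply/subsetP => -[x y]; rewrite unfold_in /= !inE /= => /andP[/and3P[_ _ exy] /eqP exyX].
have hx : x \in [set a; b] by rewrite -eX -exyX !inE eqxx.
have hy : y \in [set a; b] by rewrite -eX -exyX !inE eqxx orbT.
rewrite !inE in hx hy.
have nxy : x != y by apply/eqP => exy'; rewrite exy' e_irr in exy.
have nab : a != b by apply/eqP => eab'; rewrite eab' e_irr in eab.
move: hx hy nxy; case/orP => /eqP -> ; case/orP => /eqP ->; rewrite ?eqxx ?orbT //=.
Qed.

Lemma ind_mono (U V : {set T}) : U \subset V ->
  (#|induced_edges e U| <= #|induced_edges e V|)%N.
Proof.
move=> UV; apply: subset_leq_card; apply/subsetP => X; rewrite !inE.
by case/andP => XU ->; rewrite (subset_trans XU UV).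
Qed.

End Comb.
Unset Implicit Arguments. Set Strict Implicit.


Lemma powRq (R : realType) (q x : R) : 0 < q -> q `^ x = expR (x * ln q).
Proof. by move=> q0; rewrite /powR gt_eqF. Qed.

Lemma core (R : realType) (T : finType) (e : rel T)
  (e_sym : symmetric e) (e_irr : irreflexive e) (f lam alpha beta : R)
  (f_gt0 : 0 < f) (lam_gt0 : 0 < lam) (alpha_gt0 : 0 < alpha) (beta_gt0 : 0 < beta)
  (v : T) (U : {set T}) (m : R) :
  U \subset nbhd e v ->
  (#|induced_edges e (nbhd e v)|)%:R <= ((maxdeg e)%:R ^+ 2) / f ->
  (forall z : R, 0 <= z ->
        m <= lam / (1 + lam) *
             (alpha * (1 + lam) `^ (- z)
              + beta * zpow_term lam (2 * (maxdeg e)%:R ^+ 2 / f) z)) ->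
  m * (lam + Zs e lam U) <= alpha * lam + beta * Ws e lam U.
Proof.
move=> hU sp hm.
set c := 2 * (maxdeg e)%:R ^+ 2 / f.
set q := 1 + lam.
set L := ln q.
set n := #|U|.
set Z := Zs e lam U.
set W := Ws e lam U.
have q0 : 0 < q by rewrite /q; lra.
have q1 : 1 < q by rewrite /q; lra.
have L0 : 0 < L by rewrite /L ln_gt0.
have Z1 : 1 <= Z by apply: Zs_ge1.
have Z0 : 0 < Z by lra.
have S0 : 0 < lam + Z by lra.
have Zle : Z <= q ^+ n by apply: Zs_le.
have W0 : 0 <= W by apply: Ws_ge0; lra.
have c0 : 0 <= c by rewrite /c; apply: divr_ge0; [by rewrite mulr_ge0 ?exprn_ge0 ?ler0n | exact: ltW].
set z1 := n%:R * Z / (lam + Z).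
have z1ge0 : 0 <= z1 by apply: divr_ge0; [apply: mulr_ge0; [rewrite ler0n | lra] | lra].
have hm1 := hm z1 z1ge0.
have hA : lam / q * q `^ (- z1) * (lam + Z) <= lam.
  have key : q `^ (- z1) * (lam + Z) <= q.
    rewrite -ler_ln ?posrE ?mulr_gt0 ?powR_gt0 //.
    rewrite lnM ?posrE ?powR_gt0 // ln_powR -/L.
    have lnZ : ln Z <= n%:R * L.
      have := Zle; rewrite -ler_ln ?posrE ?exprn_gt0 // lnXn // -/L mulr_natl.
      by [].
    have := @alpha_core R lam Z n lam_gt0 Z1 lnZ; rewrite -/q -/L -/z1.
    nra.
  have -> : lam / q * q `^ (- z1) * (lam + Z) = lam / q * (q `^ (- z1) * (lam + Z)) by ring.
  have lq : 0 <= lam / q by rewrite divr_ge0 //; lra.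
  apply: le_trans (ler_wpM2l lq key) _.
  by rewrite divfK ?gt_eqF.
have hB : lam / q * zpow_term lam c z1 * (lam + Z) <= W.
  case: (posnP n) => [n0|npos].
    have -> : z1 = 0 by rewrite /z1 n0 mul0r mul0r.
    by rewrite /zpow_term eqxx mulr0 mul0r.
  have nR : 0 < n%:R :> R by rewrite ltr0n.
  have z1pos : 0 < z1 by rewrite /z1 divr_gt0 ?mulr_gt0.
  have z1le : z1 <= n%:R.
    rewrite /z1 ler_pdivrMr // ler_pM2l //; lra.
  have hz : zpow_term lam c z1 <= z1 * q `^ (- (c / n%:R)).
    rewrite /zpow_term gt_eqF //; apply: ler_wpM2l; first exact: ltW.
    apply: ler_powR; first exact: ltW.
    rewrite lerN2; apply: ler_wpM2l => //.
    by rewrite lef_pV2 ?posrE.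
  have e1 : lam / q * (z1 * q `^ (- (c / n%:R))) * (lam + Z)
            = lam / q * Z * (n%:R * q `^ (- (c / n%:R))).
    by rewrite /z1; field; rewrite !gt_eqF.
  have lq : 0 <= lam / q by rewrite divr_ge0 //; lra.
  apply: le_trans (_ : lam / q * (z1 * q `^ (- (c / n%:R))) * (lam + Z) <= _).
    apply: ler_wpM2r; first exact: ltW. exact: ler_wpM2l.
  rewrite e1.
  set d := fun u : T => (#|nbhd e u :&: U|)%:R : R.
  have hu : forall u, u \in U -> lam / q * Z * expR (- (L * d u)) <= Zu e lam U u.
    move=> u uU.
    have hb := Zu_bound e_sym e_irr lam_gt0 uU; rewrite -/Z -/q in hb.
    have eq1 : expR (L * d u) = q ^+ #|nbhd e u :&: U|.
      by rewrite /d mulrC expRM_natl /L lnK ?posrE.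
    rewrite expRN eq1.
    have qp : 0 < q ^+ (#|nbhd e u :&: U|).+1 by rewrite exprn_gt0.
    rewrite -(ler_pM2l qp); apply: le_trans _ hb.
    rewrite le_eqVlt; apply/orP; left; apply/eqP.
    have qk : q ^+ #|nbhd e u :&: U| != 0 by rewrite expf_neq0 // gt_eqF.
    rewrite exprS; field; rewrite qk gt_eqF //.
  rewrite /W Ws_eq.
  apply: le_trans (ler_sum _ hu).
  have lqZ : 0 < lam / q * Z by rewrite mulr_gt0 // divr_gt0.
  rewrite -mulr_sumr ler_pM2l //.
  have hj := @jensen_exp R T U d L; rewrite -/n in hj.
  apply: le_trans (hj npos).
  rewrite ler_pM2l // powRq // ler_expR -/L mulNr lerN2.
  have hD : \sum_(i in U) d i <= c.
    rewrite /d -natr_sum.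
    apply: le_trans (_ : (2 * #|induced_edges e (nbhd e v)|)%:R <= _).
      rewrite ler_nat; apply: leq_trans (deg_sum e_irr U) _.
      by rewrite leq_mul2l ind_mono ?orbT.
    rewrite natrM /c -mulrA; apply: ler_wpM2l => //.
  rewrite [X in X <= _]mulrC; apply: ler_wpM2r; first exact: ltW.
  by rewrite ler_pM2r ?invr_gt0.
have e2 : lam / (1 + lam) * (alpha * (1 + lam) `^ (- z1) + beta * zpow_term lam c z1) * (lam + Z)
   = alpha * (lam / q * q `^ (- z1) * (lam + Z)) + beta * (lam / q * zpow_term lam c z1 * (lam + Z)).
  by rewrite /q; ring.
apply: le_trans (_ : lam / (1 + lam) * (alpha * (1 + lam) `^ (- z1) + beta * zpow_term lam c z1) * (lam + Z) <= _).
  apply: ler_wpM2r; [exact: ltW | exact: hm1].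
rewrite e2; apply: lerD; apply: ler_wpM2l => //; exact: ltW.
Qed.


Lemma sum_sub1 (R : realType) (T : finType) (x : T) (F : {set T} -> R) :
  \sum_(B : {set T} | B \subset [set x]) F B = F [set x] + F set0.
Proof.
have ne : [set x] != set0 :> {set T}.
  by apply/negP => /eqP/setP/(_ x); rewrite !inE eqxx.
rewrite (eq_bigl (fun B => (B == [set x]) || (B == set0))); last first.
  by move=> B; rewrite subset1.
rewrite (bigD1 [set x]) ?eqxx //=; congr (_ + _).
rewrite (big_pred1 set0) // => B /=.
case: (eqVneq B [set x]) => [->|] /=; first by rewrite (negPf ne).
by rewrite andbT.
Qed.

Definition Hf (R : realType) (T : finType) (e : rel T) (lam alpha beta m : R) (v : T)
  (I : {set T}) : R :=
  if independent e I then
    lam ^+ #|I| * (alpha * (v \in I)%:R + beta * (#|nbhd e v :&: I|)%:R - m)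
  else 0.
Arguments Hf {R T}.

Lemma inner (R : realType) (T : finType) (e : rel T)
  (e_sym : symmetric e) (e_irr : irreflexive e) (f lam alpha beta : R)
  (f_gt0 : 0 < f) (lam_gt0 : 0 < lam) (alpha_gt0 : 0 < alpha) (beta_gt0 : 0 < beta)
  (v : T) (m : R) :
  (#|induced_edges e (nbhd e v)|)%:R <= ((maxdeg e)%:R ^+ 2) / f ->
  (forall z : R, 0 <= z ->
        m <= lam / (1 + lam) *
             (alpha * (1 + lam) `^ (- z)
              + beta * zpow_term lam (2 * (maxdeg e)%:R ^+ 2 / f) z)) ->
  forall J : {set T}, J \subset ~: (v |: nbhd e v) ->
  0 <= \sum_(K : {set T} | K \subset v |: nbhd e v) Hf e lam alpha beta m v (J :|: K).
Proof.
move=> sp hm J hJ.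
set Nc := v |: nbhd e v.
set N := nbhd e v.
have vN : v \notin N by rewrite /N inE e_irr.
have hJ' : forall x, x \in J -> x \notin Nc.
  by move=> x xJ; move: (subsetP hJ x xJ); rewrite inE.
case: (boolP (independent e J)) => indJ; last first.
  rewrite big1 // => K _; rewrite /Hf; case: ifP => // h.
  by move: indJ; rewrite (indep_sub (subsetUl J K) h).
set U := [set u in N | [forall w in J, ~~ e u w]].
have UN : U \subset N by apply/subsetP => u; rewrite inE => /andP[].
rewrite (split_sum Nc [set v]).
have e1 : Nc :\: [set v] = N.
  apply/setP => x; rewrite !inE; case: eqP => [->|] /=; first by rewrite e_irr.
  by [].
have e2 : Nc :&: [set v] = [set v].
  by apply/setP => x; rewrite !inE; case: eqP => [->|] /=; rewrite ?eqxx ?andbF.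
rewrite e1 e2.
under eq_bigr => C _ do rewrite sum_sub1 setU0.
rewrite big_split /=.
have disjJ : forall C : {set T}, C \subset Nc -> #|J :|: C| = (#|J| + #|C|)%N.
  move=> C /subsetP hC; rewrite cardsU; suff -> : J :&: C = set0 by rewrite cards0 subn0.
  apply/setP => x; rewrite !inE; apply/negP => /andP[xJ xC].
  by move: (hJ' x xJ); rewrite (hC x xC).
have NcN : N \subset Nc by apply/subsetP => x xN; rewrite inE xN orbT.
have s1 : \sum_(C : {set T} | C \subset N) Hf e lam alpha beta m v (J :|: (C :|: [set v]))
          = lam ^+ #|J| * (lam * (alpha - m)).
  rewrite (bigD1 set0) ?sub0set //= big1; last first.
    move=> C /andP[CN Cn0]; rewrite /Hf; case: ifP => // ind.
    case/set0Pn: Cn0 => u uC.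
    move/(indepU e_sym): ind => [_ /(indepU e_sym) [_ _ hx] _].
    move: (hx u v uC); rewrite inE eqxx => /(_ isT).
    by move: (subsetP CN u uC); rewrite /N inE e_sym => ->.
  rewrite set0U addr0 /Hf.
  have indJv : independent e (J :|: [set v]).
    apply/(indepU e_sym); split => //.
      by apply/independentP => x y; rewrite !inE => /eqP -> /eqP ->; rewrite e_irr.
    move=> x y xJ; rewrite inE => /eqP ->.
    move: (hJ' x xJ); rewrite !inE negb_or => /andP[_].
    by rewrite e_sym.
  rewrite indJv disjJ; last by rewrite sub1set !inE eqxx.
  have -> : v \in J :|: [set v] by rewrite !inE eqxx orbT.
  have -> : nbhd e v :&: (J :|: [set v]) = set0.
    apply/setP => x; rewrite !inE; apply/negP => /andP[xN /orP[xJ|/eqP xv]].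
      by move: (hJ' x xJ); rewrite !inE xN orbT.
    by move: xN; rewrite xv e_irr.
  by rewrite cards0 cards1 exprD expr1 mulr0 addr0 mulr1; ring.
have s2 : \sum_(C : {set T} | C \subset N) Hf e lam alpha beta m v (J :|: C)
          = lam ^+ #|J| * (beta * Ws e lam U - m * Zs e lam U).
  rewrite /Ws /Zs !mulr_sumr -sumrB mulr_sumr.
  have eqb : forall C : {set T}, (C \subset U) = (C \subset N) && (C \subset U).
    by move=> C; case CU: (C \subset U); rewrite ?andbF // (subset_trans CU UN).
  rewrite (eq_bigl _ _ eqb) big_mkcondr /=.
  apply: eq_bigr => C CN.
  have indE : independent e (J :|: C) = (C \subset U) && independent e C.
    apply/idP/idP.
      move/(indepU e_sym) => [_ indC hx]; rewrite indC andbT.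
      apply/subsetP => u uC; rewrite inE (subsetP CN u uC) /=.
      apply/forall_inP => w wJ; rewrite e_sym; exact: hx.
    case/andP => /subsetP CU indC; apply/(indepU e_sym); split => // x y xJ yC.
    move: (CU y yC); rewrite inE => /andP[_ /forall_inP /(_ x xJ)].
    by rewrite e_sym.
  rewrite /Hf indE.
  case: (C \subset U) => //=.
  case: (independent e C); last by rewrite mulr0 mulr0 subrr mulr0.
  rewrite disjJ ?(subset_trans CN NcN) //.
  have -> : v \in J :|: C = false.
    rewrite !inE; apply/negbTE; rewrite negb_or; apply/andP; split.
      by apply/negP => /hJ'; rewrite !inE eqxx.
    by apply/negP => /(subsetP CN); rewrite (negPf vN).
  have -> : nbhd e v :&: (J :|: C) = C.
    apply/setP => x; rewrite !inE; apply/idP/idP.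
      case/andP => xN /orP[xJ|//].
      by move: (hJ' x xJ); rewrite !inE xN orbT.
    by move=> xC; rewrite xC orbT andbT; move: (subsetP CN x xC); rewrite inE.
  by rewrite exprD mulr0 add0r; ring.
rewrite s1 s2 -mulrDr; apply: mulr_ge0; first exact: exprn_ge0 (ltW lam_gt0).
have hc := @core R T e e_sym e_irr f lam alpha beta f_gt0 lam_gt0 alpha_gt0 beta_gt0 v U m UN sp hm.
lra.
Qed.


Lemma hcZ_gt0 (R : realType) (T : finType) (e : rel T) (lam : R) :
  0 < lam -> 0 < hc_Z e lam.
Proof.
move=> l0; rewrite /hc_Z (bigD1 set0) /=; last exact: indep0.
rewrite /hc_weight cards0 expr0; apply: ltr_wpDr; last exact: ltr01.
by apply: sumr_ge0 => I _; rewrite exprn_ge0 // ltW.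
Qed.

Lemma part1 (R : realType) (T : finType) (e : rel T)
  (e_sym : symmetric e) (e_irr : irreflexive e) (f lam alpha beta : R)
  (f_gt0 : 0 < f) (lam_gt0 : 0 < lam) (alpha_gt0 : 0 < alpha) (beta_gt0 : 0 < beta)
  (v : T) (m : R) :
  (#|induced_edges e (nbhd e v)|)%:R <= ((maxdeg e)%:R ^+ 2) / f ->
  (forall z : R, 0 <= z ->
        m <= lam / (1 + lam) *
             (alpha * (1 + lam) `^ (- z)
              + beta * zpow_term lam (2 * (maxdeg e)%:R ^+ 2 / f) z)) ->
  m <= alpha * hc_Pr_in e lam v + beta * hc_E_nbhd e lam v.
Proof.
move=> sp hm.
set Zg := hc_Z e lam.
have Zg0 : 0 < Zg by apply: hcZ_gt0.
set g := fun I : {set T} => alpha * (v \in I)%:R + beta * (#|nbhd e v :&: I|)%:R.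
have hA : alpha * hc_Pr_in e lam v + beta * hc_E_nbhd e lam v =
          (\sum_(I : {set T}) (if independent e I then lam ^+ #|I| * g I else 0)) / Zg.
  rewrite /hc_Pr_in /hc_E_nbhd big_mkcond /= !mulr_sumr -big_split mulr_suml /=.
  apply: eq_bigr => I _; rewrite /hc_prob /hc_weight /g -/Zg.
  by case: (v \in I); case: (independent e I) => /=; ring.
have hB : m * Zg = \sum_(I : {set T}) (if independent e I then lam ^+ #|I| * m else 0).
  rewrite /Zg /hc_Z big_mkcond /= mulr_sumr; apply: eq_bigr => I _.
  by rewrite /hc_weight; case: ifP => _; ring.
rewrite hA ler_pdivlMr // hB -subr_ge0 -sumrB.
rewrite (eq_bigr (fun I => Hf e lam alpha beta m v I)); last first.
  move=> I _; rewrite /Hf /g; case: ifP => _; [ring | by rewrite subrr].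
rewrite (eq_bigl (fun I : {set T} => I \subset setT)); last by move=> I; rewrite subsetT.
rewrite (split_sum setT (v |: nbhd e v)) setTD setTI.
apply: sumr_ge0 => J hJ.
exact: (@inner R T e e_sym e_irr f lam alpha beta f_gt0 lam_gt0 alpha_gt0 beta_gt0 v m sp hm J hJ).
Qed.


Lemma prob_ge0 (R : realType) (T : finType) (e : rel T) (lam : R) (I : {set T}) :
  0 < lam -> 0 <= hc_prob e lam I.
Proof.
move=> l0; rewrite /hc_prob; case: ifP => // _.
by rewrite divr_ge0 ?exprn_ge0 ?ltW // hcZ_gt0.
Qed.

Lemma sum_Pr (R : realType) (T : finType) (e : rel T) (lam : R) :
  hc_E_size e lam = \sum_(v : T) hc_Pr_in e lam v.
Proof.
rewrite /hc_E_size /hc_Pr_in.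
under [RHS]eq_bigr => v _ do rewrite big_mkcond /=.
rewrite exchange_big /=; apply: eq_bigr => I _.
rewrite -big_mkcond /= sumr_const mulr_natl.
by [].
Qed.

Lemma sum_En (R : realType) (T : finType) (e : rel T) (lam : R) :
  symmetric e -> 0 < lam ->
  \sum_(v : T) hc_E_nbhd e lam v <= (maxdeg e)%:R * hc_E_size e lam.
Proof.
move=> e_sym l0.
rewrite /hc_E_nbhd /hc_E_size exchange_big /= mulr_sumr; apply: ler_sum => I _.
rewrite -mulr_suml mulrA; apply: ler_wpM2r; first exact: prob_ge0.
rewrite -natr_sum -natrM ler_nat.
have h1 : forall v, #|nbhd e v :&: I| = (\sum_(u in I) (e v u : nat))%N.
  move=> v; rewrite -sum1_card big_mkcond /= [RHS]big_mkcond /=.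
  by apply: eq_bigr => u _; rewrite !inE; case: (e v u); case: (u \in I).
under eq_bigr => v _ do rewrite h1.
rewrite exchange_big /= mulnC -sum_nat_const; apply: leq_sum => u uI.
rewrite /maxdeg; apply: (@leq_trans (deg e u)); last exact: leq_bigmax.
rewrite /deg -sum1_card [X in (_ <= X)%N]big_mkcond /=.
by apply: leq_sum => w _; rewrite !inE e_sym; case: (e u w).
Qed.

Lemma Esize_gt0 (R : realType) (T : finType) (e : rel T) (lam : R) :
  irreflexive e -> 0 < lam -> (0 < #|T|)%N -> 0 < hc_E_size e lam.
Proof.
move=> e_irr l0; case/card_gt0P => v _.
rewrite /hc_E_size (bigD1 [set v]) //=.
apply: ltr_wpDr.
  by apply: sumr_ge0 => I _; rewrite mulr_ge0 ?ler0n ?prob_ge0.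
rewrite cards1 mul1r /hc_prob.
have -> : independent e [set v].
  by apply/forallP => x; apply/implyP; rewrite inE => /eqP ->; apply/forallP => y;
     apply/implyP; rewrite inE => /eqP ->; rewrite e_irr.
by rewrite divr_gt0 ?hcZ_gt0 // /hc_weight exprn_gt0.
Qed.


Theorem lemma3p2 (R : realType) (T : finType) (e : rel T)
  (f lam alpha beta : R)
  (e_sym : symmetric e) (e_irr : irreflexive e)
  (f_gt0 : 0 < f) (lam_gt0 : 0 < lam) (alpha_gt0 : 0 < alpha) (beta_gt0 : 0 < beta)
  (T_nonempty : (0 < #|T|)%N) (Delta_ge1 : (1 <= maxdeg e)%N)
  (sparse_nbhd : forall v : T,
     (#|induced_edges e (nbhd e v)|)%:R <= ((maxdeg e)%:R ^+ 2) / f) :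
  (forall v : T, forall m : R,
     (forall z : R, 0 <= z ->
        m <= lam / (1 + lam) *
             (alpha * (1 + lam) `^ (- z)
              + beta * zpow_term lam (2 * (maxdeg e)%:R ^+ 2 / f) z)) ->
     m <= alpha * hc_Pr_in e lam v + beta * hc_E_nbhd e lam v)
  /\
  (forall m : R,
     (forall z : R, 0 < z ->
        m <= Num.max (lam / (1 + lam) * (1 + lam) `^ (- z))
                     (lam / (1 + lam) * (z / (maxdeg e)%:R) *
                      (1 + lam) `^ (- (2 * (maxdeg e)%:R ^+ 2 / (f * z))))) ->
     m <= hc_E_size e lam / (#|T|)%:R).
Proof.
split.
  move=> v m hm.
  exact: (@part1 R T e e_sym e_irr f lam alpha beta f_gt0 lam_gt0 alpha_gt0 beta_gt0 v m (sparse_nbhd v) hm).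
move=> m hm.
set D := (maxdeg e)%:R : R.
have D1 : 1 <= D by rewrite /D ler1n.
have D0 : 0 < D by lra.
set q := 1 + lam.
have q0 : 0 < q by rewrite /q; lra.
have q1 : 1 <= q by rewrite /q; lra.
set L := ln q.
have L0 : 0 < L by rewrite /L ln_gt0 /q; lra.
set Es := hc_E_size e lam.
set n := (#|T|)%:R : R.
have n0 : 0 < n by rewrite /n ltr0n.
have Es0 : 0 < Es by apply: Esize_gt0.
set X := Es / n.
have X0 : 0 < X by rewrite /X divr_gt0.
have lq0 : 0 < lam / q by rewrite divr_gt0.
have pow1 : forall x, 0 <= x -> q `^ (- x) <= 1.
  move=> x x0; rewrite -(powRr0 q); apply: ler_powR => //; lra.
have mle : m <= lam / q.
  apply: le_trans (hm 1 ltr01) _.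
  rewrite -/q -/D ge_max; apply/andP; split.
    apply: le_trans (_ : lam / q * 1 <= _); last by rewrite mulr1.
    by apply: ler_wpM2l; [exact: ltW | apply: pow1; lra].
  rewrite -mulrA; apply: le_trans (_ : lam / q * 1 <= _); last by rewrite mulr1.
  apply: ler_wpM2l; first exact: ltW.
  have h1 : 1 / D <= 1 by rewrite ler_pdivrMr // mul1r.
  have h1' : 0 <= 1 / D by rewrite divr_ge0 // ltW.
  have h2 : 0 <= q `^ (- (2 * D ^+ 2 / (f * 1))) by apply: powR_ge0.
  have h0 : 0 <= 2 * D ^+ 2 / (f * 1).
    by apply: divr_ge0; [apply: mulr_ge0; [lra | exact: exprn_ge0 (ltW D0)] | lra].
  have h3 := pow1 _ h0.
  nra.
case: (leP (lam / q) X) => [hX | hX]; first exact: le_trans hX.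
have r1 : 1 < lam / (q * X).
  have qX : 0 < q * X by rewrite mulr_gt0.
  rewrite ltr_pdivlMr // mul1r.
  have : q * X < q * (lam / q) by rewrite ltr_pM2l.
  have -> : q * (lam / q) = lam by field; rewrite gt_eqF.
  by [].
set z0 := ln (lam / (q * X)) / L.
have z0pos : 0 < z0 by rewrite /z0 divr_gt0 // ln_gt0.
have z0L : z0 * L = ln (lam / (q * X)) by rewrite /z0 divfK // gt_eqF.
have pq : forall z, q `^ (- z) = expR (- (L * z)).
  by move=> z; rewrite powRq //; congr expR; rewrite -/L; ring.
have pz0 : lam / q * q `^ (- z0) = X.
  rewrite pq [L * z0]mulrC z0L expRN lnK ?posrE ?(lt_trans ltr01) //.
  by field; rewrite !gt_eqF.
set c := 2 * D ^+ 2 / f.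
have c0 : 0 <= c.
  by apply: divr_ge0; [apply: mulr_ge0; [lra | exact: exprn_ge0 (ltW D0)] | lra].
set g := c * L.
have g0 : 0 <= g by rewrite /g mulr_ge0 // ltW.
set E0 := expR (- (g / z0)).
set K := E0 * (1 + g / z0) / L * expR (L * z0).
have E00 : 0 < E0 by rewrite expR_gt0.
have K0 : 0 < K.
  rewrite /K mulr_gt0 ?expR_gt0 // divr_gt0 // mulr_gt0 //.
  have : 0 <= g / z0 by rewrite divr_ge0 // ltW.
  lra.
have zp : forall z, zpow_term lam c z = if z == 0 then 0 else z * expR (- (g / z)).
  move=> z; rewrite /zpow_term; case: eqP => // zn.
  rewrite powRq // -/q -/L; congr (_ * expR _); rewrite /g.
  by field; apply/eqP.
set m' := lam / q * (K / D * q `^ (- z0) + 1 / D * zpow_term lam c z0).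
have KD0 : 0 < K / D by rewrite divr_gt0.
have iD0 : 0 < 1 / D by rewrite divr_gt0.
have hm' : forall v, m' <= K / D * hc_Pr_in e lam v + 1 / D * hc_E_nbhd e lam v.
  move=> v.
  apply: (@part1 R T e e_sym e_irr f lam (K / D) (1 / D) f_gt0 lam_gt0 KD0 iD0 v m' (sparse_nbhd v)).
  move=> z zge0.
  rewrite -/q -/D -/c /m' !pq !zp gt_eqF //.
  have ht := @tangent R L g z0 z E0 K L0 g0 z0pos zge0 erefl erefl.
  apply: ler_wpM2l; first exact: ltW.
  have hab : forall a b, K / D * a + 1 / D * b = (K * a + b) / D.
    by move=> a b; field; rewrite gt_eqF.
  by rewrite !hab ler_pM2r ?invr_gt0.
have hsum : n * m' <= (K / D + 1) * Es.
  have -> : n * m' = \sum_(v : T) m' by rewrite sumr_const mulr_natl.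
  apply: le_trans (ler_sum _ (fun v _ => hm' v)) _.
  rewrite big_split /= -!mulr_sumr -sum_Pr -/Es.
  have hE := @sum_En R T e lam e_sym lam_gt0; rewrite -/Es -/D in hE.
  have h : 1 / D * \sum_(v : T) hc_E_nbhd e lam v <= Es.
    apply: le_trans (_ : 1 / D * (D * Es) <= _).
      by apply: ler_wpM2l => //; exact: ltW.
    by rewrite le_eqVlt; apply/orP; left; apply/eqP; field; rewrite gt_eqF.
  rewrite mulrDl lerD2l !mul1r; by rewrite mul1r in h.
have hm2 : m' <= (K / D + 1) * X.
  by rewrite /X mulrA ler_pdivlMr // mulrC.
have em' : m' = K / D * X + lam / q * (z0 / D) * E0.
  rewrite /m' -pz0 zp gt_eqF // -/E0; field; rewrite !gt_eqF //.
have key : lam / q * (z0 / D) * E0 <= X.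
  move: hm2; rewrite em'; lra.
apply: le_trans (hm z0 z0pos) _.
rewrite -/q -/D ge_max; apply/andP; split; first by rewrite pz0.
have -> : q `^ (- (2 * D ^+ 2 / (f * z0))) = E0.
  rewrite powRq // -/L /E0 /g /c; congr expR; field; rewrite !gt_eqF //.
exact: key.
Qed.
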